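(* Let $A\subseteq B$ be an admissible extension (under the standing assumptions below). Then for every $\psi\in\mathrm{Spec}(A)$ there exists $\mu\in\mathrm{Min}(B)$ such that $\mu\cap\nabla_A\subseteq\psi$.
   Context: For an algebra $M$ of a fixed signature: $\mathrm{Con}(M)$ is its congruence lattice with bottom $\Delta_M$ and top $\nabla_M=M^2$. $[\cdot,\cdot]_M$ is the term condition commutator: for $\alpha,\beta,\mu\in\mathrm{Con}(M)$, $C(\alpha,\beta;\mu)$ means that for all $n,k$, every $(n+k)$-ary term $t$, all $(a_i,b_i)\in\alpha$ and $(c_j,d_j)\in\beta$: $(t(\bar a,\bar c),t(\bar a,\bar d))\in\mu$ iff $(t(\bar b,\bar c),t(\bar b,\bar d))\in\mu$; $[\alpha,\beta]_M=\bigcap\{\mu: C(\alpha,\beta;\mu)\}$. A congruence $\phi\neq\nabla_M$ is prime if $[\alpha,\beta]_M\subseteq\phi$ implies $\alpha\subseteq\phi$ or $\beta\subseteq\phi$; $\mathrm{Spec}(M)$ is the set of primes, $\mathrm{Min}(M)$ its minimal elements; $\rho_M(\theta)$ is the intersection of all primes containing $\theta$ ($\nabla_M$ if none); $M$ is semiprime if $\rho_M(\Delta_M)=\Delta_M$. Standing assumptions: $B$ is an algebra, $A$ is a subalgebra of $B$, $A$ and $B$ are semiprime, and the commutators of $A$ and $B$ are commutative and distributive w.r.t. arbitrary joins (i.e. $[\alpha,\beta]=[\beta,\alpha]$ and $[\bigvee_i\alpha_i,\beta]=\bigvee_i[\alpha_i,\beta]$). The extension $A\subseteq B$ is admissible iff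 $\phi\cap\nabla_A\in\mathrm{Spec}(A)$ for all $\phi\in\mathrm{Spec}(B)$. *)

(* Defs.v *)
From mathcomp Require Import all_boot.
Set Implicit Arguments. Unset Strict Implicit. Unset Printing Implicit Defensive.

Record signature := Signature { sym : Type; arity : sym -> nat }.

Record algebra (s : signature) := Algebra {
  carrier :> Type;
  ops : forall f : sym s, ('I_(arity f) -> carrier) -> carrier }.

Inductive term (s : signature) (X : Type) : Type :=
  | Var : X -> term s X
  | App : forall f : sym s, ('I_(arity f) -> term s X) -> term s X.

Fixpoint eval (s : signature) (M : algebra s) (X : Type) (env : X -> M)
  (t : term s X) : M :=
  match t with
  | Var x => env x
  | App f args => @ops s M f (fun i => eval env (args i))
  end.

Definition prel (T : Type) := T -> T -> Prop.
Definition rsub (T : Type) (r q : prel T) := forall x y, r x y -> q x y.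
Definition req (T : Type) (r q : prel T) := forall x y, r x y <-> q x y.
Definition Delta (T : Type) : prel T := fun x y => x = y.
Definition Nabla (T : Type) : prel T := fun _ _ => True.

Section Alg.
Variables (s : signature) (M : algebra s).

Definition is_cong (th : prel M) : Prop :=
  [/\ (forall x, th x x), (forall x y, th x y -> th y x),
      (forall x y z, th x y -> th y z -> th x z) &
      (forall f (a b : 'I_(arity f) -> M), (forall i, th (a i) (b i)) ->
         th (@ops s M f a) (@ops s M f b))].

Definition cjoin (I : Type) (fam : I -> prel M) : prel M :=
  fun x y => forall th, is_cong th -> (forall i, rsub (fam i) th) -> th x y.

(* Term condition C(alpha, beta; mu): (n+k)-ary terms are terms over the
   variable type 'I_n + 'I_k. *)
Definition env2 (n k : nat) (a : 'I_n -> M) (c : 'I_k -> M) : 'I_n + 'I_k -> M :=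
  fun v => match v with inl i => a i | inr j => c j end.

Definition TC (al be mu : prel M) : Prop :=
  forall (n k : nat) (t : term s ('I_n + 'I_k)) (a b : 'I_n -> M)
         (c d : 'I_k -> M),
    (forall i, al (a i) (b i)) -> (forall j, be (c j) (d j)) ->
    (mu (eval (env2 a c) t) (eval (env2 a d) t) <->
     mu (eval (env2 b c) t) (eval (env2 b d) t)).

Definition commutator (al be : prel M) : prel M :=
  fun x y => forall mu, is_cong mu -> TC al be mu -> mu x y.

Definition is_prime (ph : prel M) : Prop :=
  [/\ is_cong ph, ~ req ph (@Nabla M) &
     forall al be, is_cong al -> is_cong be ->
       rsub (commutator al be) ph -> rsub al ph \/ rsub be ph].

Definition is_min_prime (mu : prel M) : Prop :=
  is_prime mu /\ forall ph, is_prime ph -> rsub ph mu -> rsub mu ph.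

Definition rho (th : prel M) : prel M :=
  fun x y => forall ph, is_prime ph -> rsub th ph -> ph x y.

Definition semiprime : Prop := req (rho (@Delta M)) (@Delta M).

Definition comm_commutative : Prop :=
  forall al be, is_cong al -> is_cong be ->
    req (commutator al be) (commutator be al).

Definition comm_join_distributive : Prop :=
  forall (I : Type) (fam : I -> prel M) (be : prel M),
    (forall i, is_cong (fam i)) -> is_cong be ->
    req (commutator (cjoin fam) be) (cjoin (fun i => commutator (fam i) be)).

End Alg.

Definition is_subuniverse (s : signature) (B : algebra s) (S : B -> Prop) : Prop :=
  forall f (a : 'I_(arity f) -> B), (forall i, S (a i)) -> S (@ops s B f a).

Definition subalg (s : signature) (B : algebra s) (S : B -> Prop)
  (HS : is_subuniverse S) : algebra s :=
  @Algebra s {x : B | S x}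
    (fun f a => exist _ (@ops s B f (fun i => proj1_sig (a i)))
                        (HS f _ (fun i => proj2_sig (a i)))).
Arguments subalg {s B S} HS.

(* phi ∩ Nabla_A, as a relation on A *)
Definition restr (s : signature) (B : algebra s) (S : B -> Prop) (HS : is_subuniverse S)
  (ph : prel B) : prel (subalg HS) :=
  fun x y => ph (proj1_sig x) (proj1_sig y).
Arguments restr {s B S} HS ph _ _.

Definition admissible (s : signature) (B : algebra s) (S : B -> Prop)
  (HS : is_subuniverse S) : Prop :=
  forall ph, is_prime ph -> is_prime (restr HS ph).

(* Main.v *)
Require Import Defs.
From mathcomp Require Import all_boot.
From mathcomp Require classical_sets boolp.
From Stdlib Require Import Classical FunctionalExtensionality ProofIrrelevance.
Set Implicit Arguments. Unset Strict Implicit. Unset Printing Implicit Defensive.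

Lemma zornP (T : Type) (t0 : T) (R : T -> T -> Prop) :
  (forall t, R t t) -> (forall r s t, R r s -> R s t -> R r t) ->
  (forall A : T -> Prop, (forall s t, A s -> A t -> R s t \/ R t s) ->
     exists t, forall s, A s -> R s t) ->
  exists t, forall s, R t s -> R s t.
Proof.
move=> Rr Rt Ch.
pose R' := fun x y => boolp.asbool (R x y).
have h1 : forall t, R' t t by move=> t; apply/boolp.asboolP.
have h2 : forall r s t, R' r s -> R' s t -> R' r t.
  by move=> r s' u /boolp.asboolP a /boolp.asboolP b; apply/boolp.asboolP; eauto.
have h3 : forall A, classical_sets.total_on A R' -> exists t, forall s, A s -> R' s t.
  move=> A HA; have HA' : forall s t, A s -> A t -> R s t \/ R t s.
    by move=> x y Ax Ay; case: (HA x y Ax Ay) => [/boolp.asboolP|/boolp.asboolP]; auto.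
  have [t Ht] := Ch A HA'.
  by exists t => x /Ht ?; rewrite /R'; apply/boolp.asboolP.
have [t Ht] := classical_sets.ZL_preorder t0 h1 h2 h3.
exists t => x Hx; have := Ht x; rewrite /R' => /(_ (introT (boolp.asboolP _) Hx)).
by move/boolp.asboolP.
Qed.

Lemma eval_ext s (M : algebra s) X (e1 e2 : X -> M) t :
  (forall v, e1 v = e2 v) -> eval e1 t = eval e2 t.
Proof.
move=> H; elim: t => [x|f args IH] /=; first exact: H.
by congr (@ops _ _ _ _); apply: functional_extensionality => i; apply: IH.
Qed.

Lemma eval_sub s (B : algebra s) S (HS : is_subuniverse S) X
  (env : X -> subalg HS) t :
  proj1_sig (eval env t) = @eval s B X (fun v => proj1_sig (env v)) t.
Proof.
elim: t => [x|f args IH] //=.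
by congr (@ops _ _ _ _); apply: functional_extensionality => i; apply: IH.
Qed.

Lemma eval_cong s (M : algebra s) X (th : prel M) (e1 e2 : X -> M) t :
  is_cong th -> (forall v, th (e1 v) (e2 v)) -> th (eval e1 t) (eval e2 t).
Proof.
case=> r sy tr op H; elim: t => [x|f args IH] /=; first exact: H.
by apply: op.
Qed.

Lemma comm_le_left s (M : algebra s) (al be : prel M) :
  is_cong al -> rsub (commutator al be) al.
Proof.
move=> Ha x y H; apply: H => //.
move=> n k t a b c d Hab Hcd.
have E : forall c', al (eval (env2 a c') t) (eval (env2 b c') t).
  by move=> c'; apply: eval_cong => // -[i|j] /=; [apply: Hab | case: Ha].
case: Ha => r sy tr _; split => h.
- exact: (tr _ _ _ (sy _ _ (E c)) (tr _ _ _ h (E d))).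
- exact: (tr _ _ _ (E c) (tr _ _ _ h (sy _ _ (E d)))).
Qed.

Lemma restr_cong s (B : algebra s) S (HS : is_subuniverse S) (th : prel B) :
  is_cong th -> is_cong (restr HS th).
Proof.
case=> r sy tr op; split; rewrite /restr.
- by move=> x; apply: r.
- by move=> x y; apply: sy.
- by move=> x y z; apply: tr.
- by move=> f a b H /=; apply: op.
Qed.

Lemma transfer s (B : algebra s) S (HS : is_subuniverse S) (al be : prel B) x y :
  commutator (restr HS al) (restr HS be) x y ->
  commutator al be (proj1_sig x) (proj1_sig y).
Proof.
move=> H mu Hmu TCmu; apply: (H (restr HS mu)); first exact: restr_cong.
move=> n k t a b c d Ha Hb.
have E : forall (a' : 'I_n -> subalg HS) (c' : 'I_k -> subalg HS),
  proj1_sig (eval (env2 a' c') t) =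
  eval (env2 (fun i => proj1_sig (a' i)) (fun j => proj1_sig (c' j))) t.
  by move=> a' c'; rewrite eval_sub; apply: eval_ext => -[].
rewrite /restr !E; exact: TCmu.
Qed.

Lemma cjoin_cong s (M : algebra s) I (fam : I -> prel M) : is_cong (cjoin fam).
Proof.
split.
- by move=> x th [r _ _ _] _; apply: r.
- by move=> x y H th Hth Hf; case: (Hth) => _ sy _ _; apply: sy; apply: H.
- by move=> x y z H1 H2 th Hth Hf; case: (Hth) => _ _ tr _; apply: tr (H1 _ _ _) (H2 _ _ _).
- move=> f a b H th Hth Hf; case: (Hth) => _ _ _ op; apply: op => i; exact: H.
Qed.

Lemma cjoin_ub s (M : algebra s) I (fam : I -> prel M) i : rsub (fam i) (cjoin fam).
Proof. by move=> x y h th _ Hf; exact: (Hf i x y h). Qed.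

Lemma cjoin_lub s (M : algebra s) I (fam : I -> prel M) th :
  is_cong th -> (forall i, rsub (fam i) th) -> rsub (cjoin fam) th.
Proof. by move=> Hth Hf x y H; apply: H. Qed.

Lemma chain_fin T (R : T -> T -> Prop) (A : T -> Prop) (P : nat -> T -> Prop) n t1 :
  A t1 -> (forall s t, A s -> A t -> R s t \/ R t s) ->
  (forall i t t', P i t -> R t t' -> P i t') ->
  (forall i, i < n -> exists t, A t /\ P i t) ->
  exists t, A t /\ forall i, i < n -> P i t.
Proof.
move=> At1 Ch Pm; elim: n => [|n IH] H; first by exists t1.
have [t [At Pt]] := IH (fun i hi => H i (ltnW hi)).
have [t' [At' Pt']] := H n (ltnSn n).
case: (Ch t t' At At') => Rtt'.
- exists t'; split => // i; rewrite ltnS leq_eqVlt => /orP[/eqP ->//|hi].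
  exact: Pm (Pt i hi) Rtt'.
- exists t; split => // i; rewrite ltnS leq_eqVlt => /orP[/eqP ->|hi]; last exact: Pt.
  exact: Pm Pt' Rtt'.
Qed.

Theorem mainTheorem13 (s : signature) (B : algebra s) (S : B -> Prop)
  (HS : is_subuniverse S) :
  semiprime (subalg HS) -> semiprime B ->
  comm_commutative (subalg HS) -> comm_join_distributive (subalg HS) ->
  comm_commutative B -> comm_join_distributive B ->
  admissible HS ->
  forall psi : prel (subalg HS), is_prime psi ->
    exists mu : prel B, is_min_prime mu /\ rsub (restr HS mu) psi.
Proof.
move=> _ _ _ _ Bcomm Bdist _ psi [psiC psiN psiP].
have Dgood : is_cong (@Delta B) /\ rsub (restr HS (@Delta B)) psi.
  split.
    split; rewrite /Delta.
    - by [].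
    - by move=> x y ->.
    - by move=> x y z -> ->.
    - by move=> f a b H; congr (@ops _ _ _ _); apply: functional_extensionality.
  move=> [x hx] [y hy]; rewrite /restr /Delta /= => E; subst y.
  rewrite (proof_irrelevance _ hx hy); by case: psiC.
pose T1 := {th : prel B | is_cong th /\ rsub (restr HS th) psi}.
pose R1 := fun x y : T1 => rsub (sval x) (sval y).
have R1r : forall t, R1 t t by move=> t x y.
have R1t : forall r s t, R1 r s -> R1 s t -> R1 r t.
  by move=> r s' t h1 h2 x y h; apply: h2; apply: h1.
have R1c : forall A : T1 -> Prop, (forall s t, A s -> A t -> R1 s t \/ R1 t s) ->
     exists t, forall s, A s -> R1 s t.
  move=> A Ch; case: (classic (exists t, A t)) => [[t1 At1]|nA]; last first.
    by exists (exist (fun th : prel B => is_cong th /\ rsub (restr HS th) psi) _ Dgood) => x Ax; case: nA; exists x.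
  pose U := fun x y : B => exists t, A t /\ sval t x y.
  have UC : is_cong U.
    split.
    - move=> x; exists t1; split=>//; case: (proj1 (proj2_sig t1)) => r _ _ _; exact: r.
    - move=> x y [t [At h]]; exists t; split=>//.
      by case: (proj1 (proj2_sig t)) => _ sy _ _; exact: sy.
    - move=> x y z [t [At h]] [t' [At' h']]; case: (Ch t t' At At') => Rt.
      + exists t'; split=>//; case: (proj1 (proj2_sig t')) => _ _ tr _.
        exact: tr (Rt _ _ h) h'.
      + exists t; split=>//; case: (proj1 (proj2_sig t)) => _ _ tr _.
        exact: tr h (Rt _ _ h').
    - move=> f a b H.
      have Pm : forall i (t t' : T1),
          (fun i t => forall j : 'I_(arity f), nat_of_ord j = i -> sval t (a j) (b j)) i t ->
          R1 t t' ->
          (fun i t => forall j : 'I_(arity f), nat_of_ord j = i -> sval t (a j) (b j)) i t'.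
        by move=> i t t' Pt Rtt' j hj; apply: Rtt'; exact: Pt.
      have Pe : forall i, i < arity f -> exists t, A t /\
          (fun i t => forall j : 'I_(arity f), nat_of_ord j = i -> sval t (a j) (b j)) i t.
        move=> i hi; have [t [At h]] := H (Ordinal hi); exists t; split=>// j hj.
        by have -> : j = Ordinal hi by apply: val_inj.
      have [t [At Ht]] := chain_fin At1 Ch Pm Pe.
      exists t; split=>//; case: (proj1 (proj2_sig t)) => _ _ _ op.
      by apply: op => j; exact: (Ht j (ltn_ord j) j erefl).
  have UG : rsub (restr HS U) psi.
    by move=> x y [t [At h]]; exact: (proj2 (proj2_sig t)) x y h.
  by exists (exist (fun th : prel B => is_cong th /\ rsub (restr HS th) psi) U (conj UC UG)) => x Ax a b h; exists x; split.
have [[th [thC thG]] thMax] := zornP (exist (fun th : prel B => is_cong th /\ rsub (restr HS th) psi) _ Dgood) R1r R1t R1c.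
have thP : is_prime th.
  split => //.
  - move=> Hn.
    have [x [y nxy]] : exists x y, ~ psi x y.
      apply: NNPP => H; apply: psiN => x y; split=>// _; apply: NNPP => h; apply: H; eauto.
    by apply: nxy; apply: (thG); exact: (proj2 (Hn _ _) I).
  - move=> al be alC beC Hcom; apply: NNPP => Hno.
    have [nal nbe] := not_or_and _ _ Hno.
    have nG : forall g, is_cong g -> rsub th g -> ~ rsub g th ->
        exists x y, restr HS g x y /\ ~ psi x y.
      move=> g gC tg ng; apply: NNPP => H; apply: ng.
      have gG : rsub (restr HS g) psi.
        by move=> x y h; apply: NNPP => hn; apply: H; eauto.
      exact: (thMax (exist (fun th : prel B => is_cong th /\ rsub (restr HS th) psi) g (conj gC gG)) tg).
    pose fa := fun b : bool => if b then th else al.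
    pose fb := fun b : bool => if b then th else be.
    have faC : forall i, is_cong (fa i) by case.
    have fbC : forall i, is_cong (fb i) by case.
    have al'C := cjoin_cong fa.
    have be'C := cjoin_cong fb.
    have [a [b [ha hna]]] := nG _ al'C (cjoin_ub (i:=true))
      (fun h => nal (fun x y z => h x y (cjoin_ub (i:=false) z))).
    have [c [d [hc hnd]]] := nG _ be'C (cjoin_ub (fam:=fb) (i:=true))
      (fun h => nbe (fun x y z => h x y (cjoin_ub (fam:=fb) (i:=false) z))).
    have Hab : rsub (commutator (cjoin fa) (cjoin fb)) th.
      move=> x y h; have := proj1 (Bdist _ fa (cjoin fb) faC be'C x y) h.
      apply: cjoin_lub => // -[] u v /=.
      + exact: comm_le_left.
      + move=> huv; have := proj1 (Bcomm al _ alC be'C u v) huv.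
        move=> /(fun z => proj1 (Bdist _ fb al fbC alC u v) z).
        apply: cjoin_lub => // -[] p q /=.
        * exact: comm_le_left.
        * by move=> hpq; apply: Hcom; exact: (proj1 (Bcomm be al beC alC p q) hpq).
    have : ~ rsub (commutator (restr HS (cjoin fa)) (restr HS (cjoin fb))) psi.
      move=> hcm; case: (psiP _ _ (restr_cong HS al'C) (restr_cong HS be'C) hcm) => h.
      + exact: hna (h a b ha).
      + exact: hnd (h c d hc).
    apply=> e f h; apply: (thG); exact: Hab _ _ (transfer h).
pose T2 := {ph : prel B | is_prime ph /\ rsub (restr HS ph) psi}.
pose R2 := fun x y : T2 => rsub (sval y) (sval x).
have R2r : forall t, R2 t t by move=> t x y.
have R2t : forall r s t, R2 r s -> R2 s t -> R2 r t.
  by move=> r s' t h1 h2 x y h; apply: h1; apply: h2.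
have R2c : forall A : T2 -> Prop, (forall s t, A s -> A t -> R2 s t \/ R2 t s) ->
     exists t, forall s, A s -> R2 s t.
  move=> A Ch; case: (classic (exists t, A t)) => [[t1 At1]|nA]; last first.
    by exists (exist (fun ph : prel B => is_prime ph /\ rsub (restr HS ph) psi) _ (conj thP thG)) => x Ax; case: nA; exists x.
  pose Ich := fun x y : B => forall t, A t -> sval t x y.
  have cg : forall t : T2, is_cong (sval t).
    by move=> t; case: (proj1 (proj2_sig t)).
  have IP : is_prime Ich.
    split.
    - split.
      + by move=> x t At; case: (cg t) => r _ _ _; exact: r.
      + by move=> x y h t At; case: (cg t) => _ sy _ _; exact: sy (h t At).
      + by move=> x y z h1 h2 t At; case: (cg t) => _ _ tr _; exact: tr (h1 t At) (h2 t At).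
      + by move=> f a b H t At; case: (cg t) => _ _ _ op; apply: op => i; exact: H.
    - move=> Hn; case: (proj1 (proj2_sig t1)) => _ nN _; apply: nN => x y; split=>// _.
      exact: (proj2 (Hn x y) I) t1 At1.
    - move=> al be alC beC hc; apply: NNPP => Hno.
      have [nal nbe] := not_or_and _ _ Hno.
      have [t [At [x [y [hx hnx]]]]] : exists t, A t /\ exists x y, al x y /\ ~ sval t x y.
        apply: NNPP => H; apply: nal => u v hu t0 At0; apply: NNPP => hn; apply: H; eauto 6.
      have [t' [At' [z [w [hz hnz]]]]] : exists t, A t /\ exists x y, be x y /\ ~ sval t x y.
        apply: NNPP => H; apply: nbe => u v hu t0 At0; apply: NNPP => hn; apply: H; eauto 6.
      case: (Ch t t' At At') => Rt.
      + case: (proj1 (proj2_sig t')) => _ _ pr.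
        case: (pr al be alC beC (fun u v h => hc u v h t' At')) => h.
        * exact: hnx (Rt _ _ (h _ _ hx)).
        * exact: hnz (h _ _ hz).
      + case: (proj1 (proj2_sig t)) => _ _ pr.
        case: (pr al be alC beC (fun u v h => hc u v h t At)) => h.
        * exact: hnx (h _ _ hx).
        * exact: hnz (Rt _ _ (h _ _ hz)).
  have IG : rsub (restr HS Ich) psi.
    by move=> x y h; exact: (proj2 (proj2_sig t1)) x y (h t1 At1).
  by exists (exist (fun ph : prel B => is_prime ph /\ rsub (restr HS ph) psi) Ich (conj IP IG)) => x Ax a b h; exact: h x Ax.
have [[mu [muP muG]] muMax] := zornP (exist (fun ph : prel B => is_prime ph /\ rsub (restr HS ph) psi) _ (conj thP thG)) R2r R2t R2c.
exists mu; split => //; split => // ph phP phmu.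
have phG : rsub (restr HS ph) psi by move=> x y h; apply: (muG); exact: phmu _ _ h.
exact: (muMax (exist (fun ph : prel B => is_prime ph /\ rsub (restr HS ph) psi) ph (conj phP phG)) phmu).
Qed.
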